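(* For $\epsilon\in\mathbb{R}$ let $$\widetilde{\Phi}_{2,\epsilon}(x,y)=\left(\frac{(\epsilon^{2}-1)x+2\epsilon y}{2\epsilon x-2\epsilon^{2}y-\epsilon^{2}-1},\ \frac{-2\epsilon x+(\epsilon^{2}-1)y}{2\epsilon x-2\epsilon^{2}y-\epsilon^{2}-1}\right).$$ Then $\widetilde{\Phi}_{2,\epsilon}$ preserves the fibration defined by the pencil of conics $C_{2,h}=\{x^2+y^2-h(1+y)^2=0\}$. A proper parametrization of each curve $C_{2,h}$ is $$P_{2,h}(t)=\left(-\frac{2(ht-\sqrt{h})}{-1+(h-1)t^{2}}+\sqrt{h},\ -\frac{2t(ht-\sqrt{h})}{-1+(h-1)t^{2}}\right),$$ with inverse $$P_{2,h}^{-1}(x,y)=\frac{\sqrt{h}\,x+(h-1)y+h}{(h-1)x+\sqrt{h}(h-1)y+\sqrt{h}(h+1)}.$$ On each curve $C_{2,h}$, $\widetilde{\Phi}_{2,\epsilon}|_{C_{2,h}}$ is conjugate via $P_{2,h}$ to the M\''obius map $$M_{2,h}(t)=\frac{(1-\epsilon\sqrt{h})t+\epsilon}{-\epsilon(h+1)t+\epsilon\sqrt{h}+1}.$$ For a fixed $\epsilon$, on each closed curve $C_{2,h}$ the map $\widetilde{\Phi}_{2,\epsilon}$ is conjugate to a rotation with constant rotation number $\rho_\epsilon=\frac{1}{2\pi}\arg\left(\frac{1-\epsilon^{2}+2i\epsilon}{1+\epsilon^{2}}\right)$.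
   Context: $\widetilde{\Phi}_{2,\epsilon}$ is the pseudo-KHK map of the vector field $\dot x=-y+x^2$, $\dot y=x(1+y)$. A parametrization $P:\mathbb{R}\to C$ of a curve $C$ by rational functions is proper if it is birational onto $C$ (its inverse is rational). Conjugate via $P_{2,h}$ means $M_{2,h}=P_{2,h}^{-1}\circ\widetilde{\Phi}_{2,\epsilon}|_{C_{2,h}}\circ P_{2,h}$. $\arg$ takes values in $[0,2\pi)$. *)

(* Defs.v *)
From Stdlib Require Import Reals ClassicalEpsilon.
From Coquelicot Require Import Coquelicot.
Open Scope R_scope.

Definition Phi_den (e : R) (p : R * R) : R :=
  let (x, y) := p in 2 * e * x - 2 * e ^ 2 * y - e ^ 2 - 1.

Definition Phi2 (e : R) (p : R * R) : R * R :=
  let (x, y) := p in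
  (((e ^ 2 - 1) * x + 2 * e * y) / Phi_den e (x, y),
   (- 2 * e * x + (e ^ 2 - 1) * y) / Phi_den e (x, y)).

Definition C2 (h : R) (p : R * R) : Prop :=
  let (x, y) := p in x ^ 2 + y ^ 2 - h * (1 + y) ^ 2 = 0.

Definition P_den (h t : R) : R := -1 + (h - 1) * t ^ 2.

Definition P2 (h t : R) : R * R :=
  (- (2 * (h * t - sqrt h)) / P_den h t + sqrt h,
   - (2 * t * (h * t - sqrt h)) / P_den h t).

Definition Pinv_den (h : R) (p : R * R) : R :=
  let (x, y) := p in (h - 1) * x + sqrt h * (h - 1) * y + sqrt h * (h + 1).

Definition Pinv2 (h : R) (p : R * R) : R :=
  let (x, y) := p in (sqrt h * x + (h - 1) * y + h) / Pinv_den h (x, y).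

Definition M_den (e h t : R) : R := - e * (h + 1) * t + e * sqrt h + 1.

Definition M2 (e h t : R) : R := ((1 - e * sqrt h) * t + e) / M_den e h t.

Definition carg (z : C) : R :=
  epsilon (inhabits 0%R)
    (fun th => 0 <= th < 2 * PI /\ z = (Cmod z * cos th, Cmod z * sin th)).

Definition rho (e : R) : R :=
  carg ((RtoC (1 - e ^ 2) + RtoC (2 * e) * Ci) / RtoC (1 + e ^ 2))%C / (2 * PI).

Definition S1 (q : R * R) : Prop := let (u, v) := q in u ^ 2 + v ^ 2 = 1.

Definition rot (th : R) (q : R * R) : R * R :=
  let (u, v) := q in (cos th * u - sin th * v, sin th * u + cos th * v).

Definition continuous_on_set (D : R * R -> Prop) (f : R * R -> R * R) : Prop :=
  forall p, D p -> filterlim f (within D (locally p)) (locally (f p)).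

Definition conj_to_rotation (D : R * R -> Prop) (F : R * R -> R * R) (th : R) : Prop :=
  exists psi chi : R * R -> R * R,
    (forall p, D p -> S1 (psi p)) /\
    (forall q, S1 q -> D (chi q)) /\
    (forall p, D p -> chi (psi p) = p) /\
    (forall q, S1 q -> psi (chi q) = q) /\
    continuous_on_set D psi /\
    continuous_on_set S1 chi /\
    (forall p, D p -> psi (F p) = rot th (psi p)).

(* Main.v *)
Require Import Defs.
From Stdlib Require Import Reals Lra Psatz ClassicalEpsilon.
From Coquelicot Require Import Coquelicot.
Open Scope R_scope.
Lemma part1 e h p : C2 h p -> Phi_den e p <> 0 -> C2 h (Phi2 e p).
Proof.
destruct p as [x y]; unfold C2, Phi2, Phi_den; intros H D.
assert (E: ((((e ^ 2 - 1) * x + 2 * e * y) / (2 * e * x - 2 * e ^ 2 * y - e ^ 2 - 1)) ^ 2 + ((- 2 * e * x + (e ^ 2 - 1) * y) / (2 * e * x - 2 * e ^ 2 * y - e ^ 2 - 1)) ^ 2 -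
h * (1 + (- 2 * e * x + (e ^ 2 - 1) * y) / (2 * e * x - 2 * e ^ 2 * y - e ^ 2 - 1)) ^ 2) =
 ((1+e^2)^2 * (x ^ 2 + y ^ 2 - h * (1 + y) ^ 2) / (2 * e * x - 2 * e ^ 2 * y - e ^ 2 - 1)^2)).
{ field; auto. }
rewrite E, H; field; auto.
Qed.

Lemma div_eq a b t : b <> 0 -> a = t * b -> a / b = t.
Proof. intros H E; rewrite E; field; exact H. Qed.

Lemma part2 h : 0 < h ->
     (forall t, P_den h t <> 0 -> C2 h (P2 h t)) /\
     (forall t, P_den h t <> 0 -> Pinv_den h (P2 h t) <> 0 ->
        Pinv2 h (P2 h t) = t) /\
     (forall p, C2 h p -> Pinv_den h p <> 0 -> P_den h (Pinv2 h p) <> 0 ->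
        P2 h (Pinv2 h p) = p).
Proof.
intros Hh.
assert (Hs : sqrt h * sqrt h = h) by (apply sqrt_sqrt; lra).
unfold C2, P2, Pinv2, Pinv_den, P_den.
set (s := sqrt h) in *. clearbody s. subst h.
split; [|split].
- intros t Pd0. field. auto.
- intros t Pd0 Id. apply div_eq; [exact Id|]. field. exact Pd0.
- - intros p; destruct p as [x y]; intros H1 H2 H3.
  set (Nn := s * x + (s * s - 1) * y + s * s) in *.
  set (Dd := (s * s - 1) * x + s * (s * s - 1) * y + s * (s * s + 1)) in *.
  assert (I1 : (s*s-1)*Nn^2 - Dd^2 + 2*s*Dd = (s*s-1)*(x ^ 2 + y ^ 2 - s * s * (1 + y) ^ 2)) by (unfold Nn, Dd; ring).
  rewrite H1, Rmult_0_r in I1.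
  assert (I2 : Nn*(x-s) - y*Dd = s*(x ^ 2 + y ^ 2 - s * s * (1 + y) ^ 2)) by (unfold Nn, Dd; ring).
  rewrite H1, Rmult_0_r in I2.
  assert (I3 : s*s*Nn - s*Dd = s*(x-s)) by (unfold Nn, Dd; ring).
  assert (Pe : -1 + (s * s - 1) * (Nn / Dd) ^ 2 = -2*s/Dd).
  { apply Rmult_eq_reg_r with (Dd^2). 2: now apply pow_nonzero.
    field_simplify; [|exact H2|exact H2]. lra. }
  rewrite Pe in *.
  assert (Hs0 : s <> 0). { intro E; rewrite E in Hh; lra. }
  assert (A : s*s*(Nn/Dd) - s = s*(x-s)/Dd).
  { rewrite <- I3. field. exact H2. }
  assert (Y : y = Nn*(x-s)/Dd).
  { apply Rmult_eq_reg_r with Dd; [|exact H2]. field_simplify; [|exact H2]. lra. }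
  rewrite A. f_equal.
  + field. split; auto.
  + rewrite Y at 1. field. split; auto.
Qed.

Lemma nz_from F E d : d <> 0 -> F = E / d -> F <> 0 -> E <> 0.
Proof. intros Hd He HF Z; apply HF; rewrite He, Z; unfold Rdiv; ring. Qed.

Lemma part3 e h : 0 < h -> forall t : R,
     P_den h t <> 0 -> Phi_den e (P2 h t) <> 0 ->
     Pinv_den h (Phi2 e (P2 h t)) <> 0 -> M_den e h t <> 0 ->
     Pinv2 h (Phi2 e (P2 h t)) = M2 e h t.
Proof.
intros Hh t.
assert (Hs : sqrt h * sqrt h = h) by (apply sqrt_sqrt; lra).
unfold C2, P2, Pinv2, Pinv_den, P_den, Phi2, Phi_den, M2, M_den.
set (s := sqrt h) in *. clearbody s. subst h.
intros A B C0 D.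
field. 
split; [exact D|split; [exact A|]].
assert (E3 : 2 * e * (- (2 * (s * s * t - s)) + s * (-1 + (s * s - 1) * t ^ 2)) -
  2 * e ^ 2 * - (2 * t * (s * s * t - s)) -
  e ^ 2 * (-1 + (s * s - 1) * t ^ 2) - (-1 + (s * s - 1) * t ^ 2) <> 0).
{ refine (nz_from _ _ _ A _ B). field. exact A. }
split; [exact E3|].
refine (nz_from _ _ _ E3 _ C0). field. split; [exact E3|exact A].
Qed.
Lemma rho_cs e : cos (2*PI*rho e) = (1 - e^2)/(1+e^2) /\ sin (2*PI*rho e) = 2*e/(1+e^2).
Proof.
assert (He : 1 + e^2 > 0) by nra.
set (c := (1 - e^2)/(1+e^2)). set (s := 2*e/(1+e^2)).
assert (Hz : ((RtoC (1 - e ^ 2) + RtoC (2 * e) * Ci) / RtoC (1 + e ^ 2))%C = (c, s)).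
{ unfold Cdiv, Cmult, Cinv, Cplus, RtoC, Ci, c, s; simpl. f_equal; field; lra. }
assert (Hm : Cmod (c, s) = 1).
{ unfold Cmod; cbn [fst snd]. replace (c^2 + s^2) with 1. apply sqrt_1. unfold c, s; field; lra. }
assert (Ha : cos (2 * atan e) = c /\ sin (2 * atan e) = s).
{ rewrite cos_2a, sin_2a, cos_atan, sin_atan.
  assert (Q : sqrt (1 + e²) * sqrt (1 + e²) = 1 + e^2).
  { rewrite sqrt_sqrt; unfold Rsqr; nra. }
  assert (Q2 : sqrt (1 + e²) <> 0). { intro Z; rewrite Z in Q; lra. }
  unfold c, s; split; field_simplify; try split; auto; try lra;
  rewrite ?(pow2_sqrt (1+e²)) by (unfold Rsqr; nra); unfold Rsqr; field; lra. }
unfold rho, carg. rewrite Hz, Hm.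
set (P := fun th => 0 <= th < 2 * PI /\ (c, s) = (1 * cos th, 1 * sin th)).
assert (Ex : exists th, P th).
{ destruct (atan_bound e) as [b1 b2].
  destruct (Rle_lt_dec 0 (2 * atan e)) as [L|L].
  - exists (2 * atan e). split; [lra|]. destruct Ha as [H1 H2]. rewrite H1, H2. f_equal; ring.
  - exists (2 * atan e + 2 * PI). split; [lra|].
    rewrite cos_plus, sin_plus, cos_2PI, sin_2PI. destruct Ha as [H1 H2]. rewrite H1, H2. f_equal; ring. }
destruct (epsilon_spec (inhabits 0) P Ex) as [_ Hth].
set (th := epsilon (inhabits 0) P) in *.
assert (K: forall x, 2*PI*(x/(2*PI)) = x) by (intro; field; apply PI_neq0).
rewrite !K. fold P. fold th.
injection Hth; intros E2 E1. change (cos th = c /\ sin th = s). split; lra.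
Qed.

Lemma cont_pair (f g : R*R -> R) (p : R*R) : continuous f p -> continuous g p -> continuous (fun q => (f q, g q)) p.
Proof.
intros Hf Hg P [eps HP].
assert (A := Hf _ (locally_ball (f p) eps)).
assert (B := Hg _ (locally_ball (g p) eps)).
unfold filtermap in *.
generalize (filter_and _ _ A B). apply filter_imp.
intros q [H1 H2]. apply HP. split; assumption.
Qed.

Lemma cplus (f g : R*R -> R) p : continuous f p -> continuous g p -> continuous (fun q => f q + g q) p.
Proof. intros; exact (continuous_plus f g p H H0). Qed.
Lemma cmult (f g : R*R -> R) p : continuous f p -> continuous g p -> continuous (fun q => f q * g q) p.
Proof. intros; exact (continuous_mult f g p H H0). Qed.
Lemma cinv (f : R*R -> R) p : continuous f p -> f p <> 0 -> continuous (fun q => / f q) p.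
Proof. intros. apply (continuous_comp f Rinv); auto. apply continuous_Rinv; auto. Qed.
Lemma cdiv (f g : R*R -> R) p : continuous f p -> continuous g p -> g p <> 0 -> continuous (fun q => f q / g q) p.
Proof. intros. unfold Rdiv. apply cmult; auto. apply cinv; auto. Qed.
Lemma cfst p : continuous (fun q : R*R => fst q) p.
Proof. destruct p; apply continuous_fst. Qed.
Lemma csnd p : continuous (fun q : R*R => snd q) p.
Proof. destruct p; apply continuous_snd. Qed.
Lemma cconst (c : R) p : continuous (fun q : R*R => c) p.
Proof. apply continuous_const. Qed.
Lemma cminus (f g : R*R -> R) p : continuous f p -> continuous g p -> continuous (fun q => f q - g q) p.
Proof. intros. apply (continuous_ext (fun q => f q + (-1) * g q) (fun q => f q - g q) p). intros x; change (f x + -1 * g x = f x - g x :> R); ring.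
 apply cplus; [auto| apply cmult; [apply cconst|auto]]. Qed.

Definition psi (r : R) (p : R*R) : R*R := (fst p / (r * (1 + snd p)), snd p / (r * (1 + snd p))).
Definition chi (r : R) (q : R*R) : R*R := (r * fst q / (1 - r * snd q), r * snd q / (1 - r * snd q)).

Lemma part4 e h : 0 < h < 1 -> conj_to_rotation (C2 h) (Phi2 e) (2 * PI * rho e).
Proof.
intros [h0 h1].
assert (Hs : sqrt h * sqrt h = h) by (apply sqrt_sqrt; lra).
assert (r0 : 0 < sqrt h) by (apply sqrt_lt_R0; lra).
assert (r1 : sqrt h < 1) by nra.
destruct (rho_cs e) as [Hc Hsn].
set (th := 2 * PI * rho e) in *. clearbody th.
unfold conj_to_rotation, C2, S1, continuous_on_set.
set (r := sqrt h) in *. clearbody r. subst h.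
assert (Y : forall x y : R, x ^ 2 + y ^ 2 - r * r * (1 + y) ^ 2 = 0 -> 1 + y <> 0).
{ intros x y H Z. assert (y = -1) by lra. subst y. nra. }
assert (V : forall u v : R, u ^ 2 + v ^ 2 = 1 -> 1 - r * v <> 0).
{ intros u v H Z. nra. }
exists (psi r), (chi r).
split; [|split; [|split; [|split; [|split; [|split]]]]].
- intros [x y] H. unfold psi; cbn [fst snd]. specialize (Y x y H).
  assert (E : (x / (r * (1 + y))) ^ 2 + (y / (r * (1 + y))) ^ 2 = 1 + (x^2+y^2 - r*r*(1+y)^2)/(r*r*(1+y)^2)).
  { field. split; lra. }
  rewrite E, H. field. split; lra.
- intros [u v] H. unfold chi; cbn [fst snd]. specialize (V u v H).
  assert (E : (r * u / (1 - r * v)) ^ 2 + (r * v / (1 - r * v)) ^ 2 - r * r * (1 + r * v / (1 - r * v)) ^ 2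
     = r * r * (u^2 + v^2 - 1) / (1 - r*v)^2).
  { field. exact V. }
  rewrite E, H. field. exact V.
- intros [x y] H. unfold chi, psi; cbn [fst snd]. specialize (Y x y H).
  f_equal; field; split; lra.
- intros [u v] H. unfold chi, psi; cbn [fst snd]. specialize (V u v H).
  f_equal; field; split; lra.
- intros [x y] H. specialize (Y x y H).
  apply (filterlim_filter_le_1 (F := locally (x, y))). apply filter_le_within.
  unfold psi. apply cont_pair; repeat first [apply cdiv | apply cmult | apply cminus | apply cplus | apply cfst | apply csnd | apply cconst];
    cbn [fst snd]; nra.
- intros [u v] H. specialize (V u v H).
  apply (filterlim_filter_le_1 (F := locally (u, v))). apply filter_le_within.
  unfold chi. apply cont_pair; repeat first [apply cdiv | apply cmult | apply cminus | apply cplus | apply cfst | apply csnd | apply cconst];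
    cbn [fst snd]; exact V.
- intros [x y] H. specialize (Y x y H).
  set (D := 2 * e * x - 2 * e ^ 2 * y - e ^ 2 - 1).
  set (a := (e ^ 2 - 1) * x + 2 * e * y).
  set (b := - 2 * e * x + (e ^ 2 - 1) * y).
  assert (He : 1 + e^2 > 0) by nra.
  assert (Hb : b + D = - (1+e^2)*(1+y)) by (unfold a, b, D; ring).
  assert (Hab : a^2 + b^2 = (1+e^2)^2 * (x^2+y^2)) by (unfold a, b; ring).
  assert (HD : D <> 0).
  { intro Z. rewrite Z, Rplus_0_r in Hb.
    assert (b <> 0). { rewrite Hb. apply Rmult_integral_contrapositive; split; [lra|exact Y]. }
    assert (a^2 + (1 - r*r) * b^2 = 0).
    { replace (x^2+y^2) with (r*r*(1+y)^2) in Hab by lra.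
      rewrite Hb in Hab |- *. nra. }
    assert (b^2 > 0) by (apply pow2_gt_0; auto). nra. }
  unfold Phi2, Phi_den, psi, rot. fold D. fold a. fold b. cbn [fst snd].
  rewrite Hc, Hsn.
  assert (K : 1 + b / D = - (1+e^2)*(1+y) / D) by (rewrite <- Hb; field; exact HD).
  rewrite K. unfold a, b. f_equal; field; repeat split; auto; lra.
Qed.

Theorem proposition16 (e : R) :
  (* Phi preserves each conic of the pencil *)
  (forall (h : R) (p : R * R), C2 h p -> Phi_den e p <> 0 -> C2 h (Phi2 e p)) /\
  (* P_{2,h} is a proper parametrization of C_{2,h} with inverse Pinv2 *)
  (forall h : R, 0 < h ->
     (forall t, P_den h t <> 0 -> C2 h (P2 h t)) /\
     (forall t, P_den h t <> 0 -> Pinv_den h (P2 h t) <> 0 ->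
        Pinv2 h (P2 h t) = t) /\
     (forall p, C2 h p -> Pinv_den h p <> 0 -> P_den h (Pinv2 h p) <> 0 ->
        P2 h (Pinv2 h p) = p)) /\
  (* conjugacy to the Moebius map M_{2,h} *)
  (forall h : R, 0 < h -> forall t : R,
     P_den h t <> 0 -> Phi_den e (P2 h t) <> 0 ->
     Pinv_den h (Phi2 e (P2 h t)) <> 0 -> M_den e h t <> 0 ->
     Pinv2 h (Phi2 e (P2 h t)) = M2 e h t) /\
  (* on each closed curve (0 < h < 1), conjugate to the rotation by 2 pi rho_e *)
  (forall h : R, 0 < h < 1 ->
     conj_to_rotation (C2 h) (Phi2 e) (2 * PI * rho e)).
Proof.
split; [exact (part1 e)|].
split; [exact part2|].
split; [exact (part3 e)|].
exact (part4 e).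
Qed.
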